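(* Let $\mathbf V$ be a monoid variety and let $\mathcal F$ be a logic corresponding to $\mathbf V$. Let $f$ be a partial function $\Sigma^\ast\to\Sigma^\ast$ definable by an $\mathcal F$-translation. Then $f$ is definable by a complete $\mathbf V$-bimachine.
   Context: Bimachines: a bimachine is a tuple $B=(L,R,\omega,\lambda,\rho)$ where $L$ is a deterministic left automaton over $\Sigma$ with initial state $l_0$, $R$ is a deterministic right automaton (reading right to left) with initial state $r_0$, $\omega:L\times\Sigma\times R\to\Sigma^\ast$ is a partial output function and $\rho:L\to\Sigma^\ast$, $\lambda:R\to\Sigma^\ast$ are partial. For $u=\sigma_1\cdots\sigma_n$ with runs $l_0\xrightarrow{\sigma_1}l_1\cdots\xrightarrow{\sigma_n}l_n$ of $L$ and $r_n\xleftarrow{\sigma_1}r_{n-1}\cdots r_1\xleftarrow{\sigma_n}r_0$ of $R$, $[\![B]\!](u)=\lambda(r_n)\,\omega(l_0,\sigma_1,r_{n-1})\cdots\omega(l_{i-1},\sigma_i,r_{n-i})\cdots\omega(l_{n-1},\sigma_n,r_0)\,\rho(l_n)$ when all these are defined. $B$ is complete if $\omega$ is total. The transition congruence of an automaton $A$ with state set $Q$ is $u\equiv_A v$ iff for all $p,q\in Q$, ($A$ has a run from $p$ to $q$ on $u$) $\Leftrightarrow$ (it has one on $v$); the transition monoid is $\Sigma^\ast/\equiv_A$; $A$ is a $\mathbf V$-automaton if its transition monoid is in $\mathbf V$. $B$ is a $\mathbf V$-bimachine if $L$ and $R$ are $\mathbf V$-automata. A language is a $\mathbf V$-language if it is recognized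 by some $\mathbf V$-automaton. Logics: $\mathcal F$ is a fragment of monadic second-order logic over words (signature $<$ and unary letter predicates); a language is an $\mathcal F$-language if it is the set of words satisfying some closed $\mathcal F$-formula; $\mathcal F$ corresponds to $\mathbf V$ if the $\mathcal F$-languages are exactly the $\mathbf V$-languages. Translations: an $\mathcal F$-translation is a tuple $\mathcal T=(k,S,(\varphi^<_{j,\sigma,v},\varphi^>_{j,\sigma,v})_{1\le j\le k,\sigma\in\Sigma,v\in S},(\varphi^i_v)_{v\in S},(\varphi^t_v)_{v\in S})$ with $k>0$, $S\subset\Sigma^\ast$ finite, and all $\varphi$ closed $\mathcal F$-formulas. $(u,w)\in[\![\mathcal T]\!]$ iff for $u=\sigma_1\cdots\sigma_n$ there is a decomposition $w=w_0w_1\cdots w_nw_{n+1}$ with all $w_i\in S$ such that for each $1\le i\le n$ there is $j\le k$ with $\sigma_1\cdots\sigma_{i-1}\models\varphi^<_{j,\sigma_i,w_i}$ and $\sigma_{i+1}\cdots\sigma_n\models\varphi^>_{j,\sigma_i,w_i}$, and $u\models\varphi^i_{w_0}$, $u\models\varphi^t_{w_{n+1}}$. It is required to be exhaustive: for all $\sigma\in\Sigma$, $u,w\in\Sigma^\ast$ there are $j\le k$, $v\in S$ with $u\models\varphi^<_{j,\sigma,v}$ and $w\models\varphi^>_{j,\sigma,v}$; and functional: for $v_1\ne v_2$ in $S$ and any $j,j',\sigma$, either $\varphi^<_{j,\sigma,v_1}\wedge\varphi^<_{j',\sigma,v_2}$ or $\varphi^>_{j,\sigma,v_1}\wedge\varphi^>_{j',\sigma,v_2}$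 is unsatisfiable, and $\varphi^i_{v_1}\wedge\varphi^i_{v_2}$, $\varphi^t_{v_1}\wedge\varphi^t_{v_2}$ are unsatisfiable. A function is definable by $\mathcal T$ if it equals $[\![\mathcal T]\!]$. *)

(* Defs.v *)
From mathcomp Require Import all_boot.
Set Implicit Arguments. Unset Strict Implicit. Unset Printing Implicit Defensive.

Record finMon := FinMon {
  mcar :> finType;
  mmul : mcar -> mcar -> mcar;
  mone : mcar;
  mmulA : forall x y z, mmul x (mmul y z) = mmul (mmul x y) z;
  mmul1 : forall x, mmul mone x = x;
  mmulm1 : forall x, mmul x mone = x }.

Definition unitMon : finMon :=
  @FinMon unit (fun _ _ => tt) tt
    (fun _ _ _ => erefl) (fun x => match x with tt => erefl end)
    (fun x => match x with tt => erefl end).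

Section Prod.
Variables M N : finMon.
Definition pmul (x y : M * N) : M * N := (mmul x.1 y.1, mmul x.2 y.2).
Lemma pmulA x y z : pmul x (pmul y z) = pmul (pmul x y) z.
Proof. by rewrite /pmul /= !mmulA. Qed.
Lemma pmul1 x : pmul (mone M, mone N) x = x.
Proof. by case: x => a b; rewrite /pmul /= !mmul1. Qed.
Lemma pmulm1 x : pmul x (mone M, mone N) = x.
Proof. by case: x => a b; rewrite /pmul /= !mmulm1. Qed.
Definition prodMon : finMon :=
  @FinMon (M * N)%type pmul (mone M, mone N) pmulA pmul1 pmulm1.
End Prod.

Definition divides (N M : finMon) : Prop :=
  exists (S : pred M) (f : M -> N),
    [/\ S (mone M),
        (forall x y, S x -> S y -> S (mmul x y)),
        f (mone M) = mone N,
        (forall x y, S x -> S y -> f (mmul x y) = mmul (f x) (f y)) &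
        (forall n : N, exists2 x, S x & f x = n)].

(* A monoid variety (pseudovariety of finite monoids): a class of finite
   monoids closed under submonoids, homomorphic images (hence division and
   isomorphism) and finite direct products (including the empty one). *)
Definition monoid_variety (V : finMon -> Prop) : Prop :=
  [/\ V unitMon,
      (forall M N, V M -> V N -> V (prodMon M N)) &
      (forall M N, V M -> divides N M -> V N)].

Section Words.
Variable A : finType.

(* M is (isomorphic to) the quotient Sigma^* / cong : phi is a surjective
   monoid morphism from Sigma^* onto M whose kernel is cong. *)
Definition is_quotient_monoid (cong : seq A -> seq A -> Prop) (M : finMon) :=
  exists phi : seq A -> M,
    [/\ phi [::] = mone M,
        (forall u v, phi (u ++ v) = mmul (phi u) (phi v)),
        (forall m : M, exists u, phi u = m) &
        (forall u v, phi u = phi v <-> cong u v)].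

(* Transition congruence associated with a run relation
   (run u p q  <->  there is a run from p to q reading u). *)
Definition trans_cong (Q : Type) (run : seq A -> Q -> Q -> Prop) u v :=
  forall p q, run u p q <-> run v p q.

Definition trans_monoid_in (V : finMon -> Prop) (Q : Type)
  (run : seq A -> Q -> Q -> Prop) :=
  exists M : finMon, V M /\ is_quotient_monoid (trans_cong run) M.

Record automaton := Automaton {
  ast : finType;
  atrans : ast -> A -> ast -> bool;
  ainit : pred ast;
  afin : pred ast }.

Fixpoint arun (B : automaton) (u : seq A) (p q : ast B) : Prop :=
  match u with
  | [::] => p = q
  | a :: u' => exists r, atrans p a r /\ arun u' r q
  end.

Definition accepts (B : automaton) (u : seq A) : Prop :=
  exists p q, @ainit B p /\ @afin B q /\ arun u p q.

Definition V_automaton (V : finMon -> Prop) (B : automaton) :=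
  trans_monoid_in V (@arun B).

Definition language := seq A -> Prop.

Definition V_language (V : finMon -> Prop) (L : language) :=
  exists B : automaton, V_automaton V B /\ forall u, L u <-> accepts B u.

Inductive formula :=
| FTrue | FFalse
| FLetter of A & nat
| FLt of nat & nat
| FEq of nat & nat
| FIn of nat & nat
| FNot of formula
| FAnd of formula & formula
| FOr of formula & formula
| FImp of formula & formula
| FEx1 of nat & formula
| FAll1 of nat & formula
| FEx2 of nat & formula
| FAll2 of nat & formula.

Fixpoint fv1 (f : formula) : seq nat :=
  match f with
  | FTrue | FFalse => [::]
  | FLetter _ x => [:: x]
  | FLt x y | FEq x y => [:: x; y]
  | FIn x _ => [:: x]
  | FNot g => fv1 g
  | FAnd g h | FOr g h | FImp g h => fv1 g ++ fv1 h
  | FEx1 x g | FAll1 x g => filter (predC1 x) (fv1 g)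
  | FEx2 _ g | FAll2 _ g => fv1 g
  end.

Fixpoint fv2 (f : formula) : seq nat :=
  match f with
  | FTrue | FFalse | FLetter _ _ | FLt _ _ | FEq _ _ => [::]
  | FIn _ X => [:: X]
  | FNot g => fv2 g
  | FAnd g h | FOr g h | FImp g h => fv2 g ++ fv2 h
  | FEx1 _ g | FAll1 _ g => fv2 g
  | FEx2 X g | FAll2 X g => filter (predC1 X) (fv2 g)
  end.

Definition closed (f : formula) : bool := (fv1 f == [::]) && (fv2 f == [::]).

Definition upd {T : Type} (e : nat -> T) (x : nat) (v : T) : nat -> T :=
  fun y => if y == x then v else e y.

(* positions of u are 0 .. size u - 1; set variables range over sets of
   positions *)
Fixpoint sat (u : seq A) (e1 : nat -> nat) (e2 : nat -> nat -> bool)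
  (f : formula) : Prop :=
  match f with
  | FTrue => True
  | FFalse => False
  | FLetter a x => onth u (e1 x) = Some a
  | FLt x y => e1 x < e1 y
  | FEq x y => e1 x = e1 y
  | FIn x X => e2 X (e1 x)
  | FNot g => ~ sat u e1 e2 g
  | FAnd g h => sat u e1 e2 g /\ sat u e1 e2 h
  | FOr g h => sat u e1 e2 g \/ sat u e1 e2 h
  | FImp g h => sat u e1 e2 g -> sat u e1 e2 h
  | FEx1 x g => exists i, i < size u /\ sat u (upd e1 x i) e2 g
  | FAll1 x g => forall i, i < size u -> sat u (upd e1 x i) e2 g
  | FEx2 X g => exists P : nat -> bool,
      (forall i, P i -> i < size u) /\ sat u e1 (upd e2 X P) g
  | FAll2 X g => forall P : nat -> bool,
      (forall i, P i -> i < size u) -> sat u e1 (upd e2 X P) g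
  end.

(* u |= f for a closed formula f *)
Definition models (u : seq A) (f : formula) : Prop :=
  sat u (fun _ => 0) (fun _ _ => false) f.

Definition fragment := formula -> Prop.

Definition F_language (F : fragment) (L : language) :=
  exists f, F f /\ closed f /\ forall u, L u <-> models u f.

Definition corresponds (F : fragment) (V : finMon -> Prop) :=
  forall L : language, F_language F L <-> V_language V L.

Definition unsat2 (f g : formula) := ~ exists u, models u f /\ models u g.

Record translation := Translation {
  tk : nat;
  tS : seq (seq A);
  tphiL : nat -> A -> seq A -> formula;
  tphiR : nat -> A -> seq A -> formula;
  tphiI : seq A -> formula;
  tphiT : seq A -> formula }.

Definition is_F_translation (F : fragment) (T : translation) : Prop :=
  [/\ 0 < tk T,
      (forall j a v, 1 <= j <= tk T -> v \in tS T ->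
          F (tphiL T j a v) /\ closed (tphiL T j a v) /\
          F (tphiR T j a v) /\ closed (tphiR T j a v)),
      (forall v, v \in tS T -> F (tphiI T v) /\ closed (tphiI T v) /\
                               F (tphiT T v) /\ closed (tphiT T v)),
      (forall (a : A) (u w : seq A), exists j v,
          [/\ 1 <= j <= tk T, v \in tS T,
              models u (tphiL T j a v) & models w (tphiR T j a v)]) &
      (forall v1 v2, v1 \in tS T -> v2 \in tS T -> v1 <> v2 ->
         (forall j j' a, 1 <= j <= tk T -> 1 <= j' <= tk T ->
            unsat2 (tphiL T j a v1) (tphiL T j' a v2) \/
            unsat2 (tphiR T j a v1) (tphiR T j' a v2)) /\
         unsat2 (tphiI T v1) (tphiI T v2) /\
         unsat2 (tphiT T v1) (tphiT T v2))].

(* (u, w) in [[T]]: w = w_0 w_1 ... w_n w_{n+1} (ws = [:: w_0; ...; w_{n+1}]).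
   For the letter sigma_i with u = x ++ sigma_i :: y (size x = i - 1),
   the prefix is x and the suffix is y, and the block is w_i. *)
Definition trans_rel (T : translation) (u w : seq A) : Prop :=
  exists ws : seq (seq A),
    [/\ size ws = (size u).+2,
        all (fun v => v \in tS T) ws,
        w = flatten ws,
        (forall x a y, u = x ++ a :: y ->
           exists j, [/\ 1 <= j <= tk T,
                        models x (tphiL T j a (nth [::] ws (size x).+1)) &
                        models y (tphiR T j a (nth [::] ws (size x).+1))]) &
        (models u (tphiI T (nth [::] ws 0)) /\
         models u (tphiT T (nth [::] ws (size u).+1)))].

Definition definable_by (f : seq A -> option (seq A)) (T : translation) :=
  forall u w, trans_rel T u w <-> f u = Some w.

Record bimachine := Bimachine {
  Lst : finType; l0 : Lst; dL : Lst -> A -> Lst;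
  Rst : finType; r0 : Rst; dR : Rst -> A -> Rst;
  omega : Lst -> A -> Rst -> option (seq A);
  lam : Rst -> option (seq A);
  rho : Lst -> option (seq A) }.

Definition left_run (Q : Type) (d : Q -> A -> Q) (u : seq A) (p q : Q) :=
  foldl d p u = q.
Definition right_run (Q : Type) (d : Q -> A -> Q) (u : seq A) (p q : Q) :=
  foldr (fun a r => d r a) p u = q.

Definition complete (B : bimachine) := forall l a r, @omega B l a r <> None.

Definition V_bimachine (V : finMon -> Prop) (B : bimachine) :=
  trans_monoid_in V (left_run (@dL B)) /\ trans_monoid_in V (right_run (@dR B)).

Fixpoint bm_mid (B : bimachine) (l : Lst B) (u : seq A) : option (seq A) :=
  match u with
  | [::] => Some [::]
  | a :: u' =>
      match @omega B l a (foldr (fun b r => @dR B r b) (r0 B) u'),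
            bm_mid (@dL B l a) u' with
      | Some o, Some s => Some (o ++ s)
      | _, _ => None
      end
  end.

(* [[B]](u) = lambda(r_n) omega(l_0,sigma_1,r_{n-1}) ... omega(l_{n-1},sigma_n,r_0) rho(l_n) *)
Definition bm_sem (B : bimachine) (u : seq A) : option (seq A) :=
  match @lam B (foldr (fun b r => @dR B r b) (r0 B) u), bm_mid (l0 B) u,
        @rho B (foldl (@dL B) (l0 B) u) with
  | Some x, Some m, Some y => Some (x ++ m ++ y)
  | _, _, _ => None
  end.

End Words.

(* Main.v *)
From Stdlib Require Import ClassicalEpsilon.
From mathcomp Require Import all_boot.
Require Import Defs.

Set Implicit Arguments. Unset Strict Implicit. Unset Printing Implicit Defensive.

Section Gen.
Variable A : finType.
Variable V : finMon -> Prop.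
Hypothesis hV : monoid_variety V.

Section Img.
Variables (P : finMon) (h : seq A -> P).
Hypotheses (VP : V P) (h0 : h [::] = mone P)
  (hM : forall u v, h (u ++ v) = mmul (h u) (h v)).

Definition inimg (x : P) : bool :=
  if excluded_middle_informative (exists u, h u = x) then true else false.
Lemma inimgP x : reflect (exists u, h u = x) (inimg x).
Proof. rewrite /inimg; case: excluded_middle_informative => H; by constructor. Qed.

Definition ST := {x : P | inimg x}.
Lemma inimg_mul (x y : ST) : inimg (mmul (val x) (val y)).
Proof.
case: x => x /= /inimgP [u <-]; case: y => y /= /inimgP [v <-].
by apply/inimgP; exists (u ++ v).
Qed.
Lemma inimg_one : inimg (mone P).
Proof. by apply/inimgP; exists [::]. Qed.
Definition mulS (x y : ST) : ST := @exist P (fun z => inimg z) _ (inimg_mul x y).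
Definition oneS : ST := @exist P (fun z => inimg z) _ inimg_one.
Lemma mulSA x y z : mulS x (mulS y z) = mulS (mulS x y) z.
Proof. by apply: val_inj; rewrite /= mmulA. Qed.
Lemma mulS1 x : mulS oneS x = x.
Proof. by apply: val_inj; rewrite /= mmul1. Qed.
Lemma mulSm1 x : mulS x oneS = x.
Proof. by apply: val_inj; rewrite /= mmulm1. Qed.
Definition MS : finMon := @FinMon ST mulS oneS mulSA mulS1 mulSm1.

Lemma img_quot : exists M, V M /\ is_quotient_monoid (fun u v => h u = h v) M.
Proof.
exists MS; split.
  case: hV => _ _ Hd; apply: (Hd P) => //.
  exists inimg, (fun x => insubd oneS x); split.
  - exact: inimg_one.
  - by move=> x y /inimgP [u <-] /inimgP [v <-]; apply/inimgP; exists (u ++ v).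
  - by apply: val_inj; rewrite insubdK //; exact: inimg_one.
  - move=> x y Hx Hy; apply: val_inj; rewrite /= !insubdK //.
    by move: Hx Hy => /inimgP [u <-] /inimgP [v <-]; apply/inimgP; exists (u ++ v).
  - by move=> n; exists (val n); [exact: valP | apply: val_inj; rewrite insubdK //; exact: valP].
have Hi u : inimg (h u) by apply/inimgP; exists u.
exists (fun u => (@exist P (fun z => inimg z) (h u) (Hi u) : MS)); split.
- by apply: val_inj; rewrite /= h0.
- by move=> u v; apply: val_inj; rewrite /= hM.
- move=> [m Hm]; have [u Hu] := inimgP m Hm; exists u; exact: val_inj.
- move=> u v; split; first by move/(congr1 val).
  by move=> E; apply: val_inj.
Qed.
End Img.

Lemma quot_ext (c1 c2 : seq A -> seq A -> Prop) M :
  (forall u v, c1 u v <-> c2 u v) -> is_quotient_monoid c1 M -> is_quotient_monoid c2 M.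
Proof.
move=> E [phi [H1 H2 H3 H4]]; exists phi; split=> // u v.
by rewrite H4 E.
Qed.

Section Runs.
Variables (P : finMon) (h : seq A -> P).
Hypotheses (VP : V P) (h0 : h [::] = mone P)
  (hM : forall u v, h (u ++ v) = mmul (h u) (h v)).
Definition dLm (q : P) (a : A) : P := mmul q (h [:: a]).
Definition dRm (q : P) (a : A) : P := mmul (h [:: a]) q.
Lemma foldl_dLm u p : foldl dLm p u = mmul p (h u).
Proof.
elim: u p => [|a u IH] p /=; first by rewrite h0 mmulm1.
by rewrite IH /dLm -mmulA -hM.
Qed.
Lemma foldr_dRm u p : foldr (fun a r => dRm r a) p u = mmul (h u) p.
Proof.
elim: u => [|a u IH] /=; first by rewrite h0 mmul1.
by rewrite IH /dRm mmulA -hM.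
Qed.
Lemma left_tm : trans_monoid_in V (left_run dLm).
Proof.
have [M [VM HM]] := img_quot VP h0 hM.
exists M; split=> //; apply: quot_ext HM => u v; split.
  by move=> E p q; rewrite /left_run !foldl_dLm E.
move=> E; have := E (mone P) (h u); rewrite /left_run !foldl_dLm.
by rewrite !mmul1 => [[H _]]; symmetry; apply: H.
Qed.
Lemma right_tm : trans_monoid_in V (right_run dRm).
Proof.
have [M [VM HM]] := img_quot VP h0 hM.
exists M; split=> //; apply: quot_ext HM => u v; split.
  by move=> E p q; rewrite /right_run !foldr_dRm E.
move=> E; have := E (mone P) (h u); rewrite /right_run !foldr_dRm.
by rewrite !mmulm1 => [[H _]]; symmetry; apply: H.
Qed.
End Runs.

Record pack := Pack { pM : finMon; ph : seq A -> pM }.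
Definition good (p : pack) := [/\ V (pM p), ph p [::] = mone (pM p) &
  forall u v, ph p (u ++ v) = mmul (ph p u) (ph p v)].
Definition unitPack := @Pack unitMon (fun _ => tt).
Definition prodPack (p q : pack) :=
  @Pack (prodMon (pM p) (pM q)) (fun u => (ph p u, ph q u)).
Lemma good_unit : good unitPack.
Proof. by case: hV => H _ _; split=> //. Qed.
Lemma good_prod p q : good p -> good q -> good (prodPack p q).
Proof.
case=> Vp p0 pM'; case=> Vq q0 qM; split.
- by case: hV => _ H _; apply: H.
- by rewrite /= p0 q0.
- by move=> u v; rewrite /= pM' qM.
Qed.

Definition bigp (X : Type) (s : seq X) (gp : X -> pack) :=
  foldr (fun e acc => prodPack (gp e) acc) unitPack s.
Lemma good_bigp (X : Type) (s : seq X) gp :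
  (forall e, good (gp e)) -> good (bigp s gp).
Proof.
move=> H; elim: s => [|e s IH] /=; first exact: good_unit.
exact: good_prod.
Qed.
Lemma bigp_eq (X : eqType) (s : seq X) gp e u w : e \in s ->
  ph (bigp s gp) u = ph (bigp s gp) w -> ph (gp e) u = ph (gp e) w.
Proof.
elim: s => [|x s IH] //=; rewrite in_cons => /orP [/eqP ->|Hs] [E1 E2] //.
exact: IH.
Qed.
End Gen.

Definition chooseo (A : Type) (Q : A -> Prop) : option A :=
  match excluded_middle_informative (exists v, Q v) with
  | left H => Some (proj1_sig (constructive_indefinite_description _ H))
  | right _ => None
  end.
Lemma chooseo_some (B : Type) (Q : B -> Prop) v : chooseo Q = Some v -> Q v.
Proof.
rewrite /chooseo; case: excluded_middle_informative => // H [<-].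
exact: proj2_sig.
Qed.
Lemma chooseo_none (B : Type) (Q : B -> Prop) v : chooseo Q = None -> ~ Q v.
Proof.
rewrite /chooseo; case: excluded_middle_informative => // H _ Hv.
by apply: H; exists v.
Qed.

Section Main.
Variables (A : finType) (V : finMon -> Prop) (F : fragment A).
Hypotheses (hV : monoid_variety V) (hC : corresponds F V).
Variables (T : translation A) (f : seq A -> option (seq A)).
Hypotheses (hT : is_F_translation F T) (hf : definable_by f T).

Definition satur (p : pack A) (psi : formula A) :=
  F psi -> closed psi -> forall u w, ph p u = ph p w -> models u psi -> models w psi.

Lemma recog psi : exists p : pack A, good V p /\ satur p psi.
Proof.
case: (excluded_middle_informative (F psi /\ closed psi)) => [[Fp Cp]|N]; last first.
  by exists (unitPack A); split; [exact: good_unit | move=> Fp Cp; case: N].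
have [B [[M [VM [phi [p0 pm ps pk]]]] Lacc]] :
    V_language V (fun u => models u psi).
  by apply/hC; exists psi; split.
exists (@Pack A M phi); split; first by split.
move=> _ _ u w E /Lacc [p [q [Hp [Hq Hr]]]]; apply/Lacc.
by exists p, q; split=> //; split=> //; apply/(proj1 (pk u w) E).
Qed.

Definition gp psi : pack A := proj1_sig (constructive_indefinite_description _ (recog psi)).
Lemma gp_good psi : good V (gp psi).
Proof. exact: (proj1 (proj2_sig (constructive_indefinite_description _ (recog psi)))). Qed.
Lemma gp_sat psi : satur (gp psi) psi.
Proof. exact: (proj2 (proj2_sig (constructive_indefinite_description _ (recog psi)))). Qed.

Definition idxLR : seq ((nat * A) * seq A) :=
  [seq (ja, v) | ja <- [seq (j, a) | j <- iota 1 (tk T), a <- enum A], v <- tS T].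
Definition packLR (e : (nat * A) * seq A) :=
  prodPack (gp (tphiL T e.1.1 e.1.2 e.2)) (gp (tphiR T e.1.1 e.1.2 e.2)).
Definition packIT (v : seq A) := prodPack (gp (tphiI T v)) (gp (tphiT T v)).
Definition BP := prodPack (bigp idxLR packLR) (bigp (tS T) packIT).
Definition h u : pM BP := ph BP u.

Lemma BP_good : good V BP.
Proof.
apply: good_prod => //; apply: good_bigp => // e; apply: good_prod => //; exact: gp_good.
Qed.
Lemma h0 : h [::] = mone (pM BP).
Proof. by case: BP_good. Qed.
Lemma hM u v : h (u ++ v) = mmul (h u) (h v).
Proof. by case: BP_good. Qed.

Lemma satLR j a v x y : 1 <= j <= tk T -> v \in tS T -> h x = h y ->
  (models x (tphiL T j a v) -> models y (tphiL T j a v)) /\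
  (models x (tphiR T j a v) -> models y (tphiR T j a v)).
Proof.
move=> Hj Hv [E _].
have Hin : ((j, a), v) \in idxLR.
  apply: allpairs_f => //; apply: allpairs_f; last by rewrite mem_enum.
  by rewrite mem_iota addnC addn1.
have [E1 E2] := bigp_eq Hin E.
case: hT => _ HF _ _ _; have [F1 [C1 [F2 C2]]] := HF j a v Hj Hv.
by split; [exact: (gp_sat F1 C1 E1) | exact: (gp_sat F2 C2 E2)].
Qed.
Lemma satIT v x y : v \in tS T -> h x = h y ->
  (models x (tphiI T v) -> models y (tphiI T v)) /\
  (models x (tphiT T v) -> models y (tphiT T v)).
Proof.
move=> Hv [_ E]; have [E1 E2] := bigp_eq Hv E.
case: hT => _ _ HF _ _; have [F1 [C1 [F2 C2]]] := HF v Hv.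
by split; [exact: (gp_sat F1 C1 E1) | exact: (gp_sat F2 C2 E2)].
Qed.

Definition Good x a y v := v \in tS T /\ exists j, [/\ 1 <= j <= tk T,
  models x (tphiL T j a v) & models y (tphiR T j a v)].

Definition cv (l : pM BP) (a : A) (r : pM BP) : seq A :=
  odflt [::] (chooseo (fun v => v \in tS T /\ exists j x y, [/\ 1 <= j <= tk T,
     h x = l, h y = r, models x (tphiL T j a v) & models y (tphiR T j a v)])).

Lemma cv_good x a y : Good x a y (cv (h x) a (h y)).
Proof.
rewrite /cv; set Q := (fun v => _).
case E: (chooseo Q) => [v|] /=.
  have [Hv [j [x' [y' [Hj Ex Ey Hl Hr]]]]] := chooseo_some E.
  split=> //; exists j; split=> //.
    exact: (proj1 (satLR a Hj Hv Ex) Hl).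
  exact: (proj2 (satLR a Hj Hv Ey) Hr).
exfalso; case: hT => _ _ _ HE _; have [j [v [Hj Hv Hl Hr]]] := HE a x y.
apply: (chooseo_none (v:=v) E); split=> //; exists j, x, y; split.
all: by [].
Qed.

Definition lamf (r : pM BP) := chooseo (fun v => v \in tS T /\ exists x, h x = r /\ models x (tphiI T v)).
Definition rhof (l : pM BP) := chooseo (fun v => v \in tS T /\ exists x, h x = l /\ models x (tphiT T v)).

Definition BM : bimachine A :=
  @Bimachine A (pM BP) (mone _) (dLm h) (pM BP) (mone _) (dRm h)
    (fun l a r => Some (cv l a r)) lamf rhof.

Fixpoint midl (p u : seq A) : seq (seq A) :=
  match u with
  | [::] => [::]
  | a :: u' => cv (h p) a (h u') :: midl (rcons p a) u'
  end.

Lemma bm_mid_eq u p : @bm_mid A BM (h p) u = Some (flatten (midl p u)).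
Proof.
elim: u p => [|a u IH] p //=.
rewrite (foldr_dRm h0 hM) mmulm1.
have E : mmul (h p) (h [:: a]) = h (rcons p a) by rewrite -cats1 hM.
by rewrite [pmul _ _]E IH.
Qed.
Lemma midl_size u p : size (midl p u) = size u.
Proof. by elim: u p => [|a u IH] p //=; rewrite IH. Qed.
Lemma midl_all u p : all (fun v => v \in tS T) (midl p u).
Proof. by elim: u p => [|a u IH] p //=; rewrite IH andbT; case: (cv_good p a u). Qed.
Lemma midl_good x a y p :
  Good (p ++ x) a y (nth [::] (midl p (x ++ a :: y)) (size x)).
Proof.
elim: x p => [|b x IH] p /=; first by rewrite cats0; exact: cv_good.
by rewrite -cat_rcons; apply: IH.
Qed.

Lemma bm_sem_eq u : @bm_sem A BM u = f u.
Proof.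
rewrite /bm_sem /=.
rewrite (foldr_dRm h0 hM) (foldl_dLm h0 hM) mmulm1 mmul1.
have E0 : (mone (pM (bigp idxLR packLR)), mone (pM (bigp (tS T) packIT))) = h [::].
  by rewrite h0.
rewrite E0 bm_mid_eq.
case El: (lamf (h u)) => [v0|]; last first.
  case Ef: (f u) => [w|] //; have [ws [Hs Ha Hw Hp [HI HT]]] := proj2 (hf u w) Ef.
  exfalso; apply: (chooseo_none (v:=nth [::] ws 0) El); split.
    by apply: (allP Ha); apply: mem_nth; rewrite Hs.
  by exists u.
case Er: (rhof (h u)) => [vt|]; last first.
  case Ef: (f u) => [w|] //; have [ws [Hs Ha Hw Hp [HI HT]]] := proj2 (hf u w) Ef.
  exfalso; apply: (chooseo_none (v:=nth [::] ws (size u).+1) Er); split.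
    by apply: (allP Ha); apply: mem_nth; rewrite Hs.
  by exists u.
have [Hv0 [x [Ex HI]]] := chooseo_some El.
have [Hvt [y [Ey HT]]] := chooseo_some Er.
symmetry; apply/hf.
exists (v0 :: rcons (midl [::] u) vt); split.
- by rewrite /= size_rcons midl_size.
- by rewrite /= all_rcons Hv0 Hvt midl_all.
- by rewrite /= flatten_rcons catA.
- move=> x' a y' Hu.
  have Hlt : size x' < size (midl [::] u) by rewrite midl_size Hu size_cat /= addnS ltnS leq_addr.
  rewrite /= nth_rcons Hlt.
  have [_ [j [Hj H1 H2]]] := midl_good x' a y' [::].
  by exists j; split=> //; rewrite Hu.
- rewrite /= nth_rcons midl_size ltnn eqxx; split.
    exact: (proj1 (satIT Hv0 Ex) HI).
  exact: (proj2 (satIT Hvt Ey) HT).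
Qed.

Lemma main_sec : exists B : bimachine A,
    [/\ complete B, V_bimachine V B & forall u, bm_sem B u = f u].
Proof.
have [VP _ _] := BP_good.
exists BM; split.
- by [].
- split; [exact: (left_tm hV VP h0 hM) | exact: (right_tm hV VP h0 hM)].
- exact: bm_sem_eq.
Qed.
End Main.

Theorem mainTheorem4 (Sigma : finType) (V : finMon -> Prop) (F : fragment Sigma)
  (f : seq Sigma -> option (seq Sigma)) :
  monoid_variety V ->
  corresponds F V ->
  (exists T : translation Sigma, is_F_translation F T /\ definable_by f T) ->
  exists B : bimachine Sigma,
    [/\ complete B, V_bimachine V B & forall u, bm_sem B u = f u].
Proof.
move=> hV hC [T [hT hf]]; exact: (main_sec hV hC hT hf).
Qed.
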